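(* Let $\alpha\in(0,1]$ and let $G$ be a planar 3-tree with $n$ vertices. Then the tree $T(G)$ has at most $2n^{1-\alpha}$ hubs.
   Context: A planar 3-tree $G$ is constructed by starting from a triangle and repeatedly inserting a new vertex $u$ into a triangular face $\Delta=v_1v_2v_3$ of the current plane graph, joining $u$ to $v_1,v_2,v_3$. This process is encoded by a rooted tree $T=T(G)$: its nodes are triangles of $G$, its root is the initial triangle, and when $u$ is inserted into the face $\Delta=v_1v_2v_3$ (which is currently a leaf of $T$), the node $\Delta$ receives three children, the triangles $v_1v_2u$, $v_1uv_3$ and $uv_2v_3$. For a node $\Delta$ of $T$, let $V_\Delta$ be the set of vertices of $G$ lying in the interior of $\Delta$ (equivalently, the vertices inserted at nodes of the subtree rooted at $\Delta$), and $\mathrm{weight}(\Delta)=|V_\Delta|$. A node is heavy if its weight is at least $n^\alpha$. Hubs are defined top-down: the root of $T$ is a hub, and a non-root node $\Delta$ is a hub if $n^\alpha\le \mathrm{weight}(\Delta)\le \mathrm{weight}(\Delta')-n^\alpha$ for every hub $\Delta'$ that is an ancestor of $\Delta$. *)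

(* Defs.v *)
From Stdlib Require Import Reals List.
Open Scope R_scope.

(* The construction tree T(G) of a planar 3-tree G.  A node is a triangle of G;
   a leaf is a triangle that never received a vertex (a face of G), and an
   internal node [Node t1 t2 t3] is a triangle v1v2v3 into which a vertex u was
   inserted, its three children being the subtrees of v1v2u, v1uv3, uv2v3. *)
Inductive ctree : Type :=
| Leaf : ctree
| Node : ctree -> ctree -> ctree -> ctree.

(* weight(Δ) = |V_Δ| = number of vertices inserted at nodes of the subtree. *)
Fixpoint weight (t : ctree) : nat :=
  match t with
  | Leaf => 0
  | Node a b c => S (weight a + weight b + weight c)
  end.

(* number of vertices of G: the 3 initial ones plus the inserted ones *)
Definition nverts (t : ctree) : nat := 3 + weight t.

Definition thr (alpha : R) (n : nat) : R := Rpower (INR n) alpha.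

Definition Rleb (x y : R) : bool := if Rle_dec x y then true else false.

Definition is_hub (na : R) (w : nat) (ws : list nat) : bool :=
  Rleb na (INR w) && forallb (fun w' => Rleb (INR w) (INR w' - na)) ws.

(* number of hubs in a (non-root) subtree, given the weights ws of the hub
   ancestors of its root *)
Fixpoint hubs_below (na : R) (ws : list nat) (t : ctree) : nat :=
  let h := is_hub na (weight t) ws in
  let ws' := if h then weight t :: ws else ws in
  (if h then 1 else 0)%nat +
  match t with
  | Leaf => 0
  | Node a b c => hubs_below na ws' a + hubs_below na ws' b + hubs_below na ws' c
  end.

(* number of hubs of T; the root is always a hub *)
Definition num_hubs (alpha : R) (t : ctree) : nat :=
  let na := thr alpha (nverts t) in
  match t with
  | Leaf => 1
  | Node a b c =>
      1 + hubs_below na (weight t :: nil) a + hubs_below na (weight t :: nil) b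
        + hubs_below na (weight t :: nil) c
  end%nat.

(* Main.v *)
Require Import Defs.
From Stdlib Require Import Reals List Lra Lia.
Open Scope R_scope.

Definition Inv (na c : R) (g k u w : nat) : Prop :=
  INR g <= 2 * INR u / na - INR k /\ (u <= w)%nat /\
  (k = 0%nat -> g = 0%nat /\ u = 0%nat) /\ (k = 1%nat -> INR u <= c).

Lemma le_div na a b : 0 < na -> a <= b -> a / na <= b / na.
Proof.
  intros H1 H2. unfold Rdiv. apply Rmult_le_compat_r; [|exact H2].
  left; apply Rinv_0_lt_compat; exact H1.
Qed.

Lemma inv_add na c g1 k1 u1 w1 g2 k2 u2 w2 :
  Inv na c g1 k1 u1 w1 -> Inv na c g2 k2 u2 w2 ->
  Inv na c (g1+g2) (k1+k2) (u1+u2) (w1+w2).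
Proof.
  intros [A1 [B1 [C1 D1]]] [A2 [B2 [C2 D2]]].
  destruct (Nat.eq_dec k1 0) as [E1|E1].
  { destruct (C1 E1) as [-> ->]. subst k1. simpl.
    repeat split; try lia; auto. }
  destruct (Nat.eq_dec k2 0) as [E2|E2].
  { destruct (C2 E2) as [-> ->]. subst k2. rewrite !Nat.add_0_r.
    repeat split; try lia; auto. }
  repeat split; try lia.
  rewrite !plus_INR.
  replace (2 * (INR u1 + INR u2) / na) with (2 * INR u1 / na + 2 * INR u2 / na)
    by (unfold Rdiv; ring). lra.
Qed.

Lemma Rleb_true x y : Rleb x y = true -> x <= y.
Proof. unfold Rleb; destruct (Rle_dec x y); auto; discriminate. Qed.

Lemma main na (Hna : 0 < na) : forall t ws w0 rest, ws = w0 :: rest ->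
  exists k u, Inv na (INR w0 - na) (hubs_below na ws t) k u (weight t).
Proof.
  induction t as [|a IHa b IHb c IHc]; intros ws w0 rest Hws.
  - simpl. destruct (is_hub na 0 ws) eqn:H.
    + unfold is_hub in H. apply andb_prop in H as [H1 H2].
      apply Rleb_true in H1. simpl in H1. lra.
    + exists 0%nat, 0%nat. unfold Inv. simpl. repeat split; try lia; lra.
  - cbn [hubs_below]. set (w := weight (Node a b c)).
    destruct (is_hub na w ws) eqn:H.
    + unfold is_hub in H. apply andb_prop in H as [H1 H2].
      apply Rleb_true in H1. subst ws. cbn [forallb] in H2.
      apply andb_prop in H2 as [H2 _]. apply Rleb_true in H2.
      destruct (IHa (w :: w0 :: rest) w _ eq_refl) as [ka [ua Ia]].
      destruct (IHb (w :: w0 :: rest) w _ eq_refl) as [kb [ub Ib]].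
      destruct (IHc (w :: w0 :: rest) w _ eq_refl) as [kc [uc Ic]].
      pose proof (inv_add _ _ _ _ _ _ _ _ _ _ (inv_add _ _ _ _ _ _ _ _ _ _ Ia Ib) Ic)
        as [A [B [C D]]].
      exists 1%nat, w. unfold Inv. repeat split; try lia; [|intros; exact H2].
      assert (Hw1 : 1 <= INR w / na).
      { replace 1 with (na / na) by (field; lra). apply le_div; lra. }
      assert (Hsum : (weight a + weight b + weight c < w)%nat) by (unfold w; simpl; lia).
      rewrite plus_INR. change (INR 1) with 1.
      set (S := (hubs_below na (w :: w0 :: rest) a + hubs_below na (w :: w0 :: rest) b +
                hubs_below na (w :: w0 :: rest) c)%nat) in *.
      set (K := (ka + kb + kc)%nat) in *. set (U := (ua + ub + uc)%nat) in *.
      destruct (Nat.eq_dec K 0) as [E|E].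
      { destruct (C E) as [HS _]. rewrite HS. change (INR 0) with 0. lra. }
      destruct (Nat.eq_dec K 1) as [E1|E1].
      { specialize (D E1). rewrite E1 in A. simpl in A.
        assert (2 * INR U / na <= 2 * (INR w - na) / na) by (apply le_div; lra).
        replace (2 * (INR w - na) / na) with (2 * INR w / na - 2) in H by (field; lra).
        unfold Rdiv in *. lra. }
      assert (HK : 2 <= INR K) by (replace 2 with (INR 2) by (simpl; lra); apply le_INR; lia).
      assert (HU : INR U <= INR w) by (apply le_INR; lia).
      assert (2 * INR U / na <= 2 * INR w / na) by (apply le_div; lra).
      lra.
    + destruct (IHa ws w0 rest Hws) as [ka [ua Ia]].
      destruct (IHb ws w0 rest Hws) as [kb [ub Ib]].
      destruct (IHc ws w0 rest Hws) as [kc [uc Ic]].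
      pose proof (inv_add _ _ _ _ _ _ _ _ _ _ (inv_add _ _ _ _ _ _ _ _ _ _ Ia Ib) Ic)
        as [A [B [C D]]].
      exists (ka+kb+kc)%nat, (ua+ub+uc)%nat. unfold Inv. simpl plus.
      repeat split; auto; unfold w in *; simpl; lia.
Qed.

Theorem lemma2 (alpha : R) (t : ctree) :
  0 < alpha <= 1 ->
  INR (num_hubs alpha t) <= 2 * Rpower (INR (nverts t)) (1 - alpha).
Proof.
  intros [Ha1 Ha2].
  set (N := INR (nverts t)).
  assert (HN : 3 <= N).
  { unfold N, nverts. rewrite plus_INR. simpl. pose proof (pos_INR (weight t)). lra. }
  set (na := Rpower N alpha).
  assert (Hna : 0 < na) by (unfold na, Rpower; apply exp_pos).
  set (P := Rpower N (1 - alpha)).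
  assert (HP : N = P * na).
  { unfold P, na. rewrite <- Rpower_plus.
    replace (1 - alpha + alpha) with 1 by ring. rewrite Rpower_1; lra. }
  assert (HP1 : 1 <= P).
  { unfold P. rewrite <- (Rpower_O N) at 1 by lra. apply Rle_Rpower; lra. }
  assert (HPd : N / na = P) by (rewrite HP; field; lra).
  fold P. destruct t as [|a b c].
  - simpl. lra.
  - unfold num_hubs. change (thr alpha (nverts (Node a b c))) with na.
    destruct (main na Hna a _ (weight (Node a b c)) nil eq_refl) as [ka [ua Ia]].
    destruct (main na Hna b _ (weight (Node a b c)) nil eq_refl) as [kb [ub Ib]].
    destruct (main na Hna c _ (weight (Node a b c)) nil eq_refl) as [kc [uc Ic]].
    pose proof (inv_add _ _ _ _ _ _ _ _ _ _ (inv_add _ _ _ _ _ _ _ _ _ _ Ia Ib) Ic)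
      as [A [B [C D]]].
    set (W := weight (Node a b c)) in *.
    assert (HWN : INR W <= N).
    { unfold N, nverts. fold W. rewrite plus_INR. simpl. lra. }
    assert (HWP : 2 * INR W / na <= 2 * P).
    { replace (2 * P) with (2 * N / na) by (rewrite <- HPd; unfold Rdiv; ring). apply le_div; lra. }
    rewrite <- !Nat.add_assoc, plus_INR, Nat.add_assoc. change (INR 1) with 1.
    set (S := (hubs_below na (W :: nil) a + hubs_below na (W :: nil) b +
              hubs_below na (W :: nil) c)%nat) in *.
    set (K := (ka + kb + kc)%nat) in *. set (U := (ua + ub + uc)%nat) in *.
    destruct (Nat.eq_dec K 0) as [E|E].
    { destruct (C E) as [HS _]. rewrite HS. change (INR 0) with 0. lra. }
    destruct (Nat.eq_dec K 1) as [E1|E1].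
    { specialize (D E1). rewrite E1 in A. simpl in A.
      assert (2 * INR U / na <= 2 * (INR W - na) / na) by (apply le_div; lra).
      replace (2 * (INR W - na) / na) with (2 * INR W / na - 2) in H by (field; lra).
      lra. }
    assert (HK : 2 <= INR K) by (replace 2 with (INR 2) by (simpl; lra); apply le_INR; lia).
    assert (HU : INR U <= INR W) by (apply le_INR; unfold W; cbn [weight]; lia).
    assert (2 * INR U / na <= 2 * INR W / na) by (apply le_div; lra).
    lra.
Qed.
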